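(* Let $N\ge 2$ and let $r:\{0,\dots,N-1\}\to\{0,\dots,N-1\}$ be $r(k)=N-1-k$. Let $\pi$ be a permutation of $\{0,\dots,N-1\}$ with $\pi\circ r=r\circ\pi$ and $\pi(0)\in\{0,N-1\}$, and let $\rho\in\{\pi,\ r\circ\pi\}$. For a partial $N\times N$ array $A$ (some cells filled with symbols from $\{0,\dots,N-1\}$) whose first row is completely filled with a permutation of $\{0,\dots,N-1\}$, define the partial array $T(A)$ by $T(A)[\pi(i)][\rho(j)]=A[i][j]$ (cell $(\pi(i),\rho(j))$ of $T(A)$ is filled iff cell $(i,j)$ of $A$ is filled), and define $\mu(A)=\tau\circ T(A)$, where $\tau$ is the unique permutation of the symbols $\{0,\dots,N-1\}$ such that the first row of $\tau\circ T(A)$ is $0,1,\dots,N-1$ (i.e. every filled entry $x$ is replaced by $\tau(x)$). Let $H_1$ and $H_2$ be hourglass designs of order $N$ with $H_2=\mu(H_1)$. Then the number of normalized diagonal Latin squares of order $N$ that agree with $H_1$ on all filled cells of $H_1$ equals the number of normalized diagonal Latin squares of order $N$ that agree with $H_2$ on all filled cells of $H_2$.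
   Context: A diagonal Latin square of order $N$ is an $N\times N$ array with entries in $\{0,\dots,N-1\}$ such that every row, every column, the main diagonal (cells $(i,i)$) and the main antidiagonal (cells $(i,N-1-i)$) each contain every element of $\{0,\dots,N-1\}$ exactly once; rows and columns are indexed $0,\dots,N-1$. It is normalized if its first row (row $0$) is $0,1,\dots,N-1$ in this order. A hourglass design of order $N$ is a partial $N\times N$ array in which exactly the cells of row $0$, row $N-1$, the main diagonal and the main antidiagonal are filled with symbols from $\{0,\dots,N-1\}$, the first row is $0,1,\dots,N-1$, and no symbol occurs twice among the filled cells of any row, any column, the main diagonal, or the main antidiagonal. *)

(* Defs.v *)
From mathcomp Require Import all_boot all_fingroup.
Set Implicit Arguments. Unset Strict Implicit. Unset Printing Implicit Defensive.

(* Cells are pairs (row, column) in 'I_N * 'I_N; symbols are 'I_N.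
   A partial array is a map cell -> option symbol (None = empty cell).
   The reflection r(k) = N-1-k is rev_ord. *)

Definition parray (N : nat) := {ffun 'I_N * 'I_N -> option 'I_N}.
Definition sqarray (N : nat) := {ffun 'I_N * 'I_N -> 'I_N}.

Definition diag_latin N (L : sqarray N) : bool :=
  [&& [forall i : 'I_N, injectiveb (fun j : 'I_N => L (i, j))],
      [forall j : 'I_N, injectiveb (fun i : 'I_N => L (i, j))],
      injectiveb (fun i : 'I_N => L (i, i))
    & injectiveb (fun i : 'I_N => L (i, rev_ord i))].

Definition normalized N (L : sqarray N) : bool :=
  [forall i : 'I_N, forall j : 'I_N, (val i == 0) ==> (L (i, j) == j)].

Definition agrees N (H : parray N) (L : sqarray N) : bool :=
  [forall c, (H c != None) ==> (H c == Some (L c))].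

Definition n_completions N (H : parray N) : nat :=
  #|[pred L : sqarray N | [&& diag_latin L, normalized L & agrees H L]]|.

Definition no_repeat N (H : parray N) (line : 'I_N * 'I_N -> bool)
  (same : 'I_N * 'I_N -> 'I_N * 'I_N -> bool) : Prop :=
  forall c1 c2, line c1 -> line c2 -> same c1 c2 -> c1 != c2 ->
    H c1 != None -> H c1 != H c2.

Definition hourglass N (H : parray N) : Prop :=
  (forall c : 'I_N * 'I_N,
     (H c != None) =
     [|| val c.1 == 0, val c.1 == N - 1, val c.1 == val c.2
       | val c.1 + val c.2 == N - 1]) /\
  (forall i j : 'I_N, val i = 0 -> H (i, j) = Some j) /\
  no_repeat H predT (fun c1 c2 => c1.1 == c2.1) /\
  no_repeat H predT (fun c1 c2 => c1.2 == c2.2) /\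
  no_repeat H (fun c => c.1 == c.2) (fun _ _ => true) /\
  no_repeat H (fun c => val c.1 + val c.2 == N - 1) (fun _ _ => true).

Definition is_mu_image N (pi rho : {perm 'I_N}) (A B : parray N) : Prop :=
  exists tau : {perm 'I_N},
    (forall i j : 'I_N, B (pi i, rho j) = omap tau (A (i, j))) /\
    (forall i j : 'I_N, val i = 0 -> B (i, j) = Some j).

(* Main.v *)
Require Import Defs.
From mathcomp Require Import all_boot all_fingroup.
Set Implicit Arguments. Unset Strict Implicit. Unset Printing Implicit Defensive.

Section Aux.
Variable N : nat.
Implicit Types pi rho tau : {perm 'I_N}.

Definition Fm pi rho tau (L : sqarray N) : sqarray N :=
  [ffun c => tau (L ((pi^-1)%g c.1, (rho^-1)%g c.2))].

Lemma FmE pi rho tau L i j : Fm pi rho tau L (pi i, rho j) = tau (L (i, j)).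
Proof. by rewrite /Fm ffunE /= !permK. Qed.

Lemma inv_comm pi : (forall k, pi (rev_ord k) = rev_ord (pi k)) ->
  forall k, (pi^-1)%g (rev_ord k) = rev_ord ((pi^-1)%g k).
Proof.
move=> h k; apply: (@perm_inj _ pi); by rewrite h !permKV.
Qed.

Lemma inv_rho pi rho : (forall k, pi (rev_ord k) = rev_ord (pi k)) ->
  ((forall k, rho k = pi k) \/ (forall k, rho k = rev_ord (pi k))) ->
  ((forall k, (rho^-1)%g k = (pi^-1)%g k) \/
   (forall k, (rho^-1)%g k = rev_ord ((pi^-1)%g k))).
Proof.
move=> hc [h|h]; [left|right] => k; apply: (@perm_inj _ rho).
  by rewrite permKV h permKV.
by rewrite permKV h hc rev_ordK permKV.
Qed.

Lemma Fm_latin pi rho tau L :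
  (forall k, pi (rev_ord k) = rev_ord (pi k)) ->
  ((forall k, rho k = pi k) \/ (forall k, rho k = rev_ord (pi k))) ->
  diag_latin L -> diag_latin (Fm pi rho tau L).
Proof.
move=> hc hr /and4P [/forallP hrow /forallP hcol /injectiveP hd /injectiveP ha].
have hci := inv_comm hc.
apply/and4P; split.
- apply/forallP => i; apply/injectiveP => j1 j2; rewrite !ffunE /=.
  move/perm_inj/(injectiveP _ (hrow _))/perm_inj; done.
- apply/forallP => j; apply/injectiveP => i1 i2; rewrite !ffunE /=.
  move/perm_inj/(injectiveP _ (hcol _))/perm_inj; done.
- apply/injectiveP => k1 k2; rewrite !ffunE /=.
  case: (inv_rho hc hr) => h; rewrite !h.
    by move/perm_inj/hd/perm_inj.
  by move/perm_inj/ha/perm_inj.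
- apply/injectiveP => k1 k2; rewrite !ffunE /=.
  case: (inv_rho hc hr) => h; rewrite !h.
    rewrite !hci. by move/perm_inj/ha/perm_inj.
  rewrite !hci !rev_ordK. by move/perm_inj/hd/perm_inj.
Qed.

Lemma Fm_agrees pi rho tau (H1 H2 : parray N) L :
  (forall i j, H2 (pi i, rho j) = omap tau (H1 (i, j))) ->
  agrees H1 L -> agrees H2 (Fm pi rho tau L).
Proof.
move=> hrel /forallP ha; apply/forallP => [[i' j']].
rewrite -(permKV pi i') -(permKV rho j') hrel FmE.
have := ha ((pi^-1)%g i', (rho^-1)%g j').
by case: (H1 _) => //= x /eqP [->].
Qed.

Lemma Fm_inj pi rho tau : injective (Fm pi rho tau).
Proof.
move=> L1 L2 e; apply/ffunP => [[i j]].
by apply: (@perm_inj _ tau); rewrite -!(FmE pi rho) e.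
Qed.

Definition S (H : parray N) := [set L : sqarray N | diag_latin L && agrees H L].

Lemma leqS pi rho tau (H1 H2 : parray N) :
  (forall k, pi (rev_ord k) = rev_ord (pi k)) ->
  ((forall k, rho k = pi k) \/ (forall k, rho k = rev_ord (pi k))) ->
  (forall i j, H2 (pi i, rho j) = omap tau (H1 (i, j))) ->
  #|S H1| <= #|S H2|.
Proof.
move=> hc hr hrel.
rewrite -(card_imset _ (@Fm_inj pi rho tau)).
apply: subset_leq_card; apply/subsetP => L' /imsetP [L].
rewrite !inE => /andP [h1 h2] ->.
by rewrite Fm_latin //; apply: Fm_agrees hrel h2.
Qed.

Lemma n_compl_S (H : parray N) :
  (forall i j : 'I_N, val i = 0 -> H (i, j) = Some j) ->
  n_completions H = #|S H|.
Proof.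
move=> h0; apply: eq_card => L; rewrite !inE /=.
case: (diag_latin L) => //=.
case hA: (agrees H L); rewrite ?andbF ?andbT //.
apply/forallP => i; apply/forallP => j; apply/implyP => /eqP hi.
by move/forallP: hA => /(_ (i, j)); rewrite h0 //= => /eqP [<-].
Qed.

End Aux.

Theorem proposition1 (N : nat) (hN : 2 <= N) (pi rho : {perm 'I_N})
  (hcomm : forall k : 'I_N, pi (rev_ord k) = rev_ord (pi k))
  (hpi0 : forall i : 'I_N, val i = 0 -> val (pi i) = 0 \/ val (pi i) = N - 1)
  (hrho : (forall k : 'I_N, rho k = pi k) \/
          (forall k : 'I_N, rho k = rev_ord (pi k)))
  (H1 H2 : parray N) (hH1 : hourglass H1) (hH2 : hourglass H2)
  (hmu : is_mu_image pi rho H1 H2) :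
  n_completions H1 = n_completions H2.
Proof.
case: hH1 => _ [h1 _]; case: hH2 => _ [h2 _].
rewrite (n_compl_S h1) (n_compl_S h2).
case: hmu => tau [hrel _].
apply/eqP; rewrite eqn_leq (leqS hcomm hrho hrel) /=.
apply: (leqS (tau:=(tau^-1)%g) (inv_comm hcomm) (inv_rho hcomm hrho)) => i j.
rewrite -[in RHS](permKV pi i) -[in RHS](permKV rho j) hrel.
by case: (H1 _) => //= x; rewrite (permK tau x).
Qed.
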